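(* For every integer $n\ge 54$, the number of arrays $\mathbf{X}\in\{0,1\}^{n\times n}$ with $|\mathbb{D}_{1,1}(\mathbf{X})|<\frac{n^2}{2}$ is at most $\sqrt{2}\cdot 2^{n^2-3n}$.
   Context: $\mathbb{D}_{1,1}(\mathbf{X})$ denotes the set of distinct $(n-1)\times(n-1)$ arrays obtainable from $\mathbf{X}$ by deleting one row and one column. (Such arrays are called bad in the paper, and the set of them is denoted $\mathcal{B}_n$.) *)

(* Defs.v *)
From HB Require Import structures.
From mathcomp Require Import all_boot all_order all_algebra.
Set Implicit Arguments. Unset Strict Implicit. Unset Printing Implicit Defensive.
Import Order.TTheory GRing.Theory Num.Theory.

Definition D11 (n : nat) (X : 'M[bool]_n) : {set 'M[bool]_(n.-1, n.-1)} :=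
  [set row' i (col' j X) | i : 'I_n, j : 'I_n].

(* Main.v *)
Require Import Defs.
From HB Require Import structures.
From mathcomp Require Import all_boot all_order all_algebra.
From mathcomp Require Import zify.
Set Implicit Arguments. Unset Strict Implicit. Unset Printing Implicit Defensive.
Import Order.TTheory GRing.Theory Num.Theory.

Lemma union_le (T I : finType) (F : I -> {set T}) :
  #|\bigcup_i F i| <= \sum_i #|F i|.
Proof.
elim/big_rec2: _ => [|i m U _ le]; first by rewrite cards0.
by rewrite (leq_trans (leq_card_setU (F i) U).1) ?leq_add2l.
Qed.



Section S.
Variable n : nat.
Implicit Types X Y : 'M[bool]_n.

Definition rdeg X (r j j' : 'I_n) : bool :=
  [exists r0 : 'I_n, (val r == r0.+1) &&
     [forall c : 'I_n.-1, X r (lift j c) == X r0 (lift j' c)]].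

Definition RD X : {set 'I_n} := [set r | [exists j, exists j', rdeg X r j j']].
Definition CD X : {set 'I_n} := RD X^T.

Lemma coll_row X (i i' j j' : 'I_n) : i < i' ->
  row' i (col' j X) = row' i' (col' j' X) -> rdeg X i' j j'.
Proof.
move=> lt h.
have h1 : i'.-1 < n.-1 by move: (ltn_ord i'); lia.
have h2 : i'.-1 < n by move: (ltn_ord i'); lia.
apply/existsP; exists (Ordinal h2); apply/andP; split; first by apply/eqP => /=; lia.
apply/forallP => c; apply/eqP.
have := congr1 (fun M : 'M_(n.-1,n.-1) => M (Ordinal h1) c) h; rewrite !mxE.
have -> : lift i (Ordinal h1) = i' by apply: val_inj; rewrite /= /bump; lia.
have -> : lift i' (Ordinal h1) = Ordinal h2 by apply: val_inj; rewrite /= /bump; lia.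
done.
Qed.

Lemma coll_col X (i j j' : 'I_n) : j < j' ->
  row' i (col' j X) = row' i (col' j' X) -> rdeg X^T j' i i.
Proof.
move=> lt h.
have h1 : j'.-1 < n.-1 by move: (ltn_ord j'); lia.
have h2 : j'.-1 < n by move: (ltn_ord j'); lia.
apply/existsP; exists (Ordinal h2); apply/andP; split; first by apply/eqP => /=; lia.
apply/forallP => c; apply/eqP; rewrite !mxE.
have := congr1 (fun M : 'M_(n.-1,n.-1) => M c (Ordinal h1)) h; rewrite !mxE.
have -> : lift j (Ordinal h1) = j' by apply: val_inj; rewrite /= /bump; lia.
have -> : lift j' (Ordinal h1) = Ordinal h2 by apply: val_inj; rewrite /= /bump; lia.
done.
Qed.

Lemma D11_lb X : (n - #|RD X|) * (n - #|CD X|) <= #|D11 X|.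
Proof.
pose h (p : 'I_n * 'I_n) := row' p.1 (col' p.2 X).
have inj : {in setX (~: RD X) (~: CD X) &, injective h}.
  move=> [i j] [i' j'] /setXP[/= Hi Hj] /setXP[/= Hi' Hj'] /= e.
  rewrite /h /= in e.
  case: (ltngtP i i') => [lt|lt|eqi].
  - move: Hi'; rewrite inE => /negP; case; rewrite inE.
    by apply/existsP; exists j; apply/existsP; exists j'; apply: coll_row lt e.
  - move: Hi; rewrite inE => /negP; case; rewrite inE.
    by apply/existsP; exists j'; apply/existsP; exists j; apply: coll_row lt (esym e).
  have ei : i = i' by apply: val_inj.
  subst i'.
  case: (ltngtP j j') => [lt|lt|eqj].
  - move: Hj'; rewrite inE => /negP; case; rewrite inE.
    by apply/existsP; exists i; apply/existsP; exists i; apply: coll_col lt e.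
  - move: Hj; rewrite inE => /negP; case; rewrite inE.
    by apply/existsP; exists i; apply/existsP; exists i; apply: coll_col lt (esym e).
  by have -> : j = j' by apply: val_inj.
have <- : #|setX (~: RD X) (~: CD X)| = (n - #|RD X|) * (n - #|CD X|).
  rewrite cardsX (cardsCs (RD X)) (cardsCs (CD X)) card_ord.
  have h1 : #|~: RD X| <= n by rewrite -[X in _ <= X](card_ord n) max_card.
  have h2 : #|~: CD X| <= n by rewrite -[X in _ <= X](card_ord n) max_card.
  by rewrite !subKn.
rewrite -(card_in_imset inj); apply: subset_leq_card.
apply/subsetP => M /imsetP [[i j] _ ->]; rewrite /h /D11.
by apply/imset2P; exists i j.
Qed.

Lemma det_card (S : {set 'M[bool]_n}) (F : {set 'I_n * 'I_n}) :
  {in S &, forall X Y, (forall p, p \in F -> X p.1 p.2 = Y p.1 p.2) -> X = Y} ->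
  #|S| <= 2 ^ #|F|.
Proof.
move=> det.
pose g X := [set p in F | X p.1 p.2].
have inj : {in S &, injective g}.
  move=> X Y XS YS e; apply: det => // p pF.
  have := congr1 (fun A : {set 'I_n * 'I_n} => p \in A) e; rewrite /g !inE pF /=.
  by case: (X p.1 p.2); case: (Y p.1 p.2).
rewrite -card_powerset -(card_in_imset inj); apply: subset_leq_card.
apply/subsetP => A /imsetP [X _ ->]; rewrite inE; apply/subsetP => p.
by rewrite inE => /andP[].
Qed.

Definition W := ('I_n * 'I_n * 'I_n)%type.
Definition St (t : {ffun 'I_5 -> W}) : {set 'M[bool]_n} :=
  [set X | injectiveb (fun k => (t k).1.1) &&
           [forall k, rdeg X (t k).1.1 (t k).1.2 (t k).2]].

Lemma St_card t : #|St t| <= 2 ^ (n * n - 5 * n.-1).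
Proof.
have [injt|ninj] := boolP (injectiveb (fun k => (t k).1.1)); last first.
  have -> : St t = set0 by apply/setP => X; rewrite !inE (negbTE ninj).
  by rewrite cards0.
move/injectiveP: injt => injt.
pose E := [set p : 'I_n * 'I_n | [exists k, (p.1 == (t k).1.1) && (p.2 != (t k).1.2)]].
have cE : 5 * n.-1 <= #|E|.
  pose g (q : 'I_5 * 'I_n.-1) := ((t q.1).1.1, lift (t q.1).1.2 q.2).
  have ginj : injective g.
    move=> [k c] [k' c'] [/injt ek]; subst k' => e2; congr (_, _); apply: val_inj; by rewrite /= -(bumpK (t k).1.2 c) e2 bumpK.
  have <- : #|g @: [set: 'I_5 * 'I_n.-1]| = 5 * n.-1.
    by rewrite card_imset // cardsT card_prod !card_ord.
  apply: subset_leq_card; apply/subsetP => p /imsetP [[k c] _ ->].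
  rewrite inE; apply/existsP; exists k; rewrite /= eqxx /=.
  by rewrite eq_sym neq_lift.
have cF : #|~: E| <= n * n - 5 * n.-1.
  have := cardsC E; rewrite card_prod card_ord; lia.
apply: (leq_trans _ (leq_pexp2l _ cF)) => //.
apply: det_card => X Y; rewrite !inE => /andP[_ /forallP HX] /andP[_ /forallP HY] agree.
suff H : forall m (r : 'I_n), r < m -> forall c, X r c = Y r c.
  by apply/matrixP => r c; apply: (H r.+1).
elim=> [//|m IH] r rm c.
have [pE|pnE] := boolP ((r, c) \in E); last by apply: (agree (r, c)); rewrite inE.
move: pE; rewrite inE => /existsP [k /andP [/= /eqP er ncj]].
have := HX k; have := HY k; subst r.
move=> /existsP [r0 /andP [/eqP e0 /forallP HY0]].
move=> /existsP [r1 /andP [/eqP e1 /forallP HX1]].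
have e01 : r0 = r1 by apply: val_inj; move: e0 e1 => /= -> [].
subst r1.
case: (unliftP (t k).1.2 c) ncj => [c' ->|->]; last by rewrite eqxx.
move=> _.
rewrite (eqP (HX1 c')) (eqP (HY0 c')) IH //.
move: rm; rewrite e0; lia.
Qed.

Lemma coverR : [set X | 5 <= #|RD X|] \subset \bigcup_t St t.
Proof.
apply/subsetP => X; rewrite inE => h5.
pose wit r := odflt (r, r) [pick jj : 'I_n * 'I_n | rdeg X r jj.1 jj.2].
pose rk (k : 'I_5) : 'I_n := enum_val (widen_ord h5 k).
pose t : {ffun 'I_5 -> W} := [ffun k => (rk k, (wit (rk k)).1, (wit (rk k)).2)].
apply/bigcupP; exists t => //; rewrite inE; apply/andP; split.
  apply/injectiveP => k k'; rewrite !ffunE /= => /enum_val_inj /(congr1 val) /= e.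
  exact: val_inj.
apply/forallP => k; rewrite ffunE /=.
have : rk k \in RD X by apply: enum_valP.
rewrite inE => /existsP [j /existsP [j' h]].
rewrite /wit; case: pickP => [jj //| none].
by have := none (j, j'); rewrite /= h.
Qed.

Lemma countR : #|[set X | 5 <= #|RD X|]| <= n ^ 15 * 2 ^ (n * n - 5 * n.-1).
Proof.
apply: leq_trans (subset_leq_card coverR) _.
apply: leq_trans (union_le _) _.
apply: (@leq_trans (\sum_(t : {ffun 'I_5 -> W}) 2 ^ (n * n - 5 * n.-1))).
  by apply: leq_sum => t _; apply: St_card.
rewrite sum_nat_const card_ffun !card_prod !card_ord.
by rewrite -[15]/(3 * 5) expnM (expnS n 2) (expnS n 1) expn1 mulnA.
Qed.
End S.

Lemma countC n : #|[set X : 'M[bool]_n | 5 <= #|CD X|]| = #|[set X : 'M[bool]_n | 5 <= #|RD X|]|.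
Proof.
have -> : [set X : 'M[bool]_n | 5 <= #|CD X|] = trmx @: [set X : 'M[bool]_n | 5 <= #|RD X|].
  apply/setP => X; rewrite inE /CD; apply/idP/imsetP => [h|[Y HY ->]].
    by exists (trmx X); rewrite ?inE ?trmxK.
  by move: HY; rewrite inE trmxK.
by rewrite card_imset //; apply: trmx_inj.
Qed.

Lemma bern n k : k <= n -> (n.+1) ^ k * (n - k) <= n ^ k.+1.
Proof.
elim: k => [|k IH] hk; first by rewrite expn0 mul1n subn0 expn1.
have h := IH (ltnW hk).
have h2 : n.+1 * (n - k.+1) <= (n - k) * n by nia.
rewrite [n.+1 ^ k.+1]expnS [n ^ k.+2]expnS.
move: h h2; set a := n.+1 ^ k; set b := n ^ k.+1 => h h2.
apply: (@leq_trans (a * ((n - k) * n))).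
  by rewrite mulnAC mulnC; apply: leq_mul (leqnn a) h2.
by rewrite mulnA [n * b]mulnC; apply: leq_mul h (leqnn n).
Qed.

Lemma key n : 54 <= n -> 64 * n ^ 15 <= 4 ^ n.
Proof.
elim: n => [//|n IH] hn.
have [e|lt] := eqVneq n 53.
  subst n.
  apply: (@leq_trans (2 ^ 6 * (2 ^ 6) ^ 15)).
    by rewrite leq_mul2l /= leq_exp2r.
  by rewrite -expnM -expnD -[4]/(2 ^ 2) -expnM leq_exp2l.
have hn' : 54 <= n by move: hn lt; lia.
have := IH hn'.
have h3 : n.+1 ^ 15 <= 4 * n ^ 15.
  have h := @bern n 15 (leq_trans (isT : 15 <= 54) hn').
  rewrite -(@leq_pmul2r n); last by lia.
  apply: (leq_trans (leq_mul (leqnn _) (_ : n <= 4 * (n - 15)))); first by lia.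
  by rewrite mulnCA -mulnA leq_mul2l -expnSr h orbT.
move=> h4; rewrite [4 ^ n.+1]expnS.
apply: (@leq_trans (4 * (64 * n ^ 15))); last by rewrite leq_mul2l h4 orbT.
by rewrite [4 * (64 * _)]mulnCA leq_mul2l h3 orbT.
Qed.

Lemma arith n : 54 <= n -> 2 * (n ^ 15 * 2 ^ (n * n - 5 * n.-1)) <= 2 ^ (n ^ 2 - 3 * n).
Proof.
move=> hn.
have -> : n ^ 2 - 3 * n = (n * n - 5 * n.-1) + (2 * n - 5) by rewrite -mulnn; nia.
rewrite expnD mulnA [X in _ <= X]mulnC; apply: leq_mul => //.
rewrite -(@leq_pmul2l (2 ^ 5)) // mulnA -expnD subnKC; last by lia.
by rewrite expnM; apply: key.
Qed.

Local Open Scope ring_scope.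

Theorem lemma4 (R : rcfType) (n : nat) (hn : (54 <= n)%N) :
  (#|[set X : 'M[bool]_n | (2 * #|D11 X| < n ^ 2)%N]|%:R : R)
    <= Num.sqrt 2 * 2 ^+ (n ^ 2 - 3 * n)%N.
Proof.
have hbad : [set X : 'M[bool]_n | (2 * #|D11 X| < n ^ 2)%N] \subset
    [set X | (5 <= #|RD X|)%N] :|: [set X | (5 <= #|CD X|)%N].
  apply/subsetP => X; rewrite !inE => hX; apply/negPn/negP.
  rewrite negb_or -!ltnNge => /andP [h1 h2].
  have h3 := D11_lb X.
  have h4 : ((n - 4) * (n - 4) <= (n - #|RD X|) * (n - #|CD X|))%N.
    by apply: leq_mul; apply: leq_sub2l; lia.
  move: hX h3 h4; set D := #|D11 X|; set P := ((n - #|RD X|) * (n - #|CD X|))%N.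
  move=> hX h3 h4; nia.
have hc : (#|[set X : 'M[bool]_n | (2 * #|D11 X| < n ^ 2)%N]| <= 2 ^ (n ^ 2 - 3 * n))%N.
  apply: leq_trans (subset_leq_card hbad) _.
  apply: leq_trans (leq_card_setU _ _).1 _.
  rewrite countC addnn -mul2n; apply: leq_trans (arith hn).
  by rewrite leq_mul2l countR orbT.
apply: (@le_trans _ _ ((2 ^ (n ^ 2 - 3 * n))%N%:R)); first by rewrite ler_nat.
rewrite natrX ler_peMl // ?exprn_ge0 //.
have s1 : (1 : R) <= Num.sqrt 2 by rewrite -{1}sqrtr1 ler_sqrt // ?ler1n.
by [].
Qed.
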